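(* Let $n\ge1$, $b>0$, let $\varepsilon_1,\dots,\varepsilon_n$ be i.i.d. with $\mathbf{P}(\varepsilon_i=\pm1)=\frac12$ and $R_n:=\sum_{i=1}^n\varepsilon_i$. For $y\in\mathbb{R}$ put $x:=\frac{y\sqrt n}{2b}+\frac n2$. Let $u_*$ be the unique solution in $(0,1)$ of $\ln\frac{1-u}{-\ln u}-1-\frac12\frac{(1+u)\ln u}{1-u}=0$ (numerically $u_*=0.00505778\ldots$), $u_{**}:=\frac{u_*}{1-u_*}$, and $j_{**}:=\big\lfloor\frac{n-u_{**}}{1+u_{**}}\big\rfloor$. Then $$c_3\,\mathbf{P}^{\mathrm{Lin,LC}}\Big(R_n\ge1+\frac{y\sqrt n}{b}\Big)\le c_3\,\mathbf{P}^{\mathrm{LC}}\Big(R_n\ge\frac{y\sqrt n}{b}\Big)$$ for all $y$ with $x\le j_{**}$, where $c_3:=2e^3/9$. Moreover, if $n\le196$, this inequality holds for all $y$ with $x\le n$.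
   Context: $z\mapsto\mathbf{P}^{\mathrm{LC}}(R_n\ge z)$ is the least log-concave majorant on $\mathbb{R}$ of $z\mapsto\mathbf{P}(R_n\ge z)$. $\mathbf{P}^{\mathrm{Lin}}(R_n\ge z)$ is the linear interpolation of $z\mapsto\mathbf{P}(R_n\ge z)$ over the lattice $\{n+2k:k\in\mathbb{Z}\}$: $\mathbf{P}^{\mathrm{Lin}}(R_n\ge z)=(1-\gamma)\mathbf{P}(R_n\ge n+2k)+\gamma\mathbf{P}(R_n\ge n+2k+2)$ whenever $\gamma:=(z-n-2k)/2\in[0,1]$; $\mathbf{P}^{\mathrm{Lin,LC}}(R_n\ge\cdot)$ is the least log-concave majorant of $\mathbf{P}^{\mathrm{Lin}}(R_n\ge\cdot)$ on $\mathbb{R}$. Least log-concave majorant of $\phi\ge0$: the smallest $g\ge\phi$ with $g\ge0$ and $\ln g$ concave (values $-\infty$ allowed). *)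

(* Defs.v *)
From HB Require Import structures.
From mathcomp Require Import all_boot all_order all_algebra.
From mathcomp Require Import all_classical all_reals.
From mathcomp Require Import all_analysis.
Set Implicit Arguments. Unset Strict Implicit. Unset Printing Implicit Defensive.
Import Order.TTheory GRing.Theory Num.Theory.
Local Open Scope classical_set_scope.
Local Open Scope ring_scope.

Section Defs.
Variable R : realType.

Definition Rsum (n : nat) (e : {ffun 'I_n -> bool}) : R :=
  \sum_(i < n) (if e i then 1 else -1).

Definition tailR (n : nat) (z : R) : R :=
  #|[pred e : {ffun 'I_n -> bool} | z <= Rsum e]|%:R / 2 ^+ n.

(* linear interpolation of tailR n over the lattice n + 2Z *)
Definition tailLin (n : nat) (z : R) : R :=
  let k : int := Num.floor ((z - n%:R) / 2) in
  let g : R := (z - n%:R) / 2 - k%:~R in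
  (1 - g) * tailR n (n%:R + 2 * k%:~R) + g * tailR n (n%:R + 2 * k%:~R + 2).

(* g >= 0 and ln g concave on R (with ln 0 = -oo) *)
Definition log_concave (g : R -> R) : Prop :=
  (forall x, 0 <= g x) /\
  (forall x y t, 0 < t < 1 ->
     g x `^ t * g y `^ (1 - t) <= g (t * x + (1 - t) * y)).

(* least log-concave majorant of phi on R, as the pointwise infimum of all
   log-concave majorants *)
Definition LCmaj (phi : R -> R) (z : R) : R :=
  inf [set g z | g in [set g : R -> R | log_concave g /\ forall w, phi w <= g w]].

Definition c3 : R := 2 * expR 3 / 9.

End Defs.

(* Main.v *)
Require Import Defs.
From HB Require Import structures.
From mathcomp Require Import all_boot all_order all_algebra.
From mathcomp Require Import all_classical all_reals.
From mathcomp Require Import all_analysis.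
From mathcomp Require Import zify lra ring.
Import Order.TTheory GRing.Theory Num.Theory.
Definition nf {n} (e : {ffun 'I_n -> bool}) : nat := #|[set i | ~~ e i]|.
Definition Nc n j := #|[pred e : {ffun 'I_n -> bool} | nf e <= j]|.
Definition Sb n j := \sum_(i < j.+1) 'C(n, i).

Lemma card_le_sets (T : finType) j :
  #|[set A : {set T} | #|A| <= j]| = \sum_(i < j.+1) 'C(#|T|, i).
Proof.
elim: j => [|j IH].
  rewrite big_ord_recr big_ord0 /= -card_draws.
  transitivity #|[set A : {set T} | #|A| == 0]|; last by [].
  by rewrite (_ : [set A : {set T} | #|A| <= 0] = [set A : {set T} | #|A| == 0]) //; apply/setP => A; rewrite !inE leqn0.
rewrite big_ord_recr /= -IH -card_draws.
rewrite -(cardsID [set A : {set T} | #|A| <= j] [set A : {set T} | #|A| <= j.+1]).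
congr (_ + _).
  rewrite (_ : [set A : {set T} | #|A| <= j.+1] :&: [set A : {set T} | #|A| <= j] = [set A : {set T} | #|A| <= j]) //.
  apply/setP => A; rewrite !inE.
  by apply/andP/idP => [[]//|h]; split => //; exact: leqW.
rewrite (_ : [set A : {set T} | #|A| <= j.+1] :\: [set A : {set T} | #|A| <= j] = [set A : {set T} | #|A| == j.+1]) //.
apply/setP => A; rewrite !inE.
by rewrite andbC -ltnNge -eqn_leq.
Qed.

Lemma Nc_Sb n j : Nc n j = Sb n j.
Proof.
rewrite /Nc /Sb.
pose phi := fun e : {ffun 'I_n -> bool} => [set i | ~~ e i].
pose psi := fun A : {set 'I_n} => [ffun i => i \notin A].
have c1 : cancel phi psi by move=> e; apply/ffunP => i; rewrite /psi /phi ffunE inE negbK.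
have c2 : cancel psi phi by move=> A; apply/setP => i; rewrite /psi /phi inE ffunE negbK.
have -> : #|[pred e : {ffun 'I_n -> bool} | nf e <= j]| = #|phi @^-1: [set A : {set 'I_n} | #|A| <= j]|.
  by apply: eq_card => e; rewrite !inE.
rewrite on_card_preimset; last by apply: onW_bij; exists psi.
by rewrite card_le_sets card_ord.
Qed.

Lemma Nc_le n j : Nc n j <= 2 ^ n.
Proof.
by apply: leq_trans (max_card _) _; rewrite card_ffun card_bool card_ord.
Qed.

Lemma Nc_full n j : n <= j -> Nc n j = 2 ^ n.
Proof.
move=> nj; rewrite /Nc (_ : 2 ^ n = #|{ffun 'I_n -> bool}|); last first.
  by rewrite card_ffun card_bool card_ord.
apply: eq_card => e; rewrite !inE; apply: leq_trans nj.
by rewrite /nf -[X in _ <= X](card_ord n); apply: max_card.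
Qed.

Lemma Sb_succ n j : Sb n j.+1 = Sb n j + 'C(n, j.+1).
Proof. by rewrite /Sb big_ord_recr. Qed.

Lemma Sb_ge1 n j : 1 <= Sb n j.
Proof. by rewrite /Sb big_ord_recl bin0 leq_addr. Qed.

Lemma C_le_Sb n j : 'C(n, j) <= Sb n j.
Proof. by rewrite /Sb big_ord_recr leq_addl. Qed.

Lemma Sb_mono n j : Sb n j <= Sb n j.+1.
Proof. by rewrite Sb_succ leq_addr. Qed.

Lemma binLC n k : 'C(n, k.+2) * 'C(n, k) <= 'C(n, k.+1) * 'C(n, k.+1).
Proof.
have [nk|kn] := leqP n k.+1.
  by rewrite bin_small ?mul0n // ltnS.
have e1 := mul_bin_left n k.+1.
have e2 := mul_bin_left n k.
have pos : 0 < k.+2 * (n - k) by rewrite muln_gt0 /=; lia.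
rewrite -(leq_pmul2r pos).
have -> : 'C(n, k.+2) * 'C(n, k) * (k.+2 * (n - k)) = (k.+2 * 'C(n, k.+2)) * ((n - k) * 'C(n, k)).
  ring.
rewrite e1 -e2.
have -> : (n - k.+1) * 'C(n, k.+1) * (k.+1 * 'C(n, k.+1)) = 'C(n, k.+1) * 'C(n, k.+1) * ((n - k.+1) * k.+1).
  ring.
by apply: leq_mul => //; rewrite mulnC; apply: leq_mul; lia.
Qed.

Lemma SbD n j : 'C(n, j.+2) * Sb n j <= 'C(n, j.+1) * Sb n j.+1.
Proof.
elim: j => [|j IH].
  rewrite /Sb !big_ord_recr !big_ord0 /= !add0n.
  have := binLC n 0; rewrite mulnDr; lia.
rewrite (Sb_succ n j.+1) (Sb_succ n j) mulnDr mulnDr.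
apply: leq_add; last exact: binLC.
have [c0|c0] := posnP 'C(n, j.+2).
  have : 'C(n, j.+3) = 0.
    have : ~~ (0 < 'C(n, j.+2)) by rewrite c0.
    by rewrite bin_gt0 -ltnNge => h; apply: bin_small; lia.
  by move=> ->; rewrite mul0n.
rewrite -(leq_pmul2r c0).
apply: (@leq_trans ('C(n, j.+3) * ('C(n, j.+1) * Sb n j.+1))).
  by rewrite -mulnA leq_mul2l mulnC IH orbT.
have := binLC n j.+1.
move=> h; rewrite mulnA -(Sb_succ n j).
have -> : 'C(n, j.+2) * Sb n j.+1 * 'C(n, j.+2) = 'C(n, j.+2) * 'C(n, j.+2) * Sb n j.+1 by ring.
by rewrite leq_mul2r h orbT.
Qed.

Lemma SbLC n j : Sb n j * Sb n j.+2 <= Sb n j.+1 * Sb n j.+1.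
Proof.
have := SbD n j.
rewrite (Sb_succ n j.+1) [in X in _ <= X](Sb_succ n j).
have := Sb_succ n j; lia.
Qed.

Lemma Sb_ratio n j : j <= n -> j.+1 * Sb n j.+1 <= n.+1 * Sb n j.
Proof.
move=> jn; rewrite Sb_succ mulnDr mul_bin_left.
have := C_le_Sb n j.
have -> : n.+1 * Sb n j = j.+1 * Sb n j + (n - j) * Sb n j.
  rewrite -mulnDl; congr (_ * _); lia.
move=> h; rewrite leq_add2l; exact: leq_mul.
Qed.

Local Open Scope ring_scope.
Section S.
Variable R : realType.
Local Open Scope convex_scope.
Lemma expR_conv (t a b : R) : 0 <= t <= 1 ->
  expR (t * a + (1 - t) * b) <= t * expR a + (1 - t) * expR b.
Proof.
case/andP=> t0 t1.
have := convex_expR (Itv01 t0 t1) a b.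
by rewrite !convRE /=.
Qed.
Local Close Scope convex_scope.

Lemma bern (s t : R) : 0 < s -> 0 <= t <= 1 -> expR (t * ln s) <= 1 + t * (s - 1).
Proof.
move=> s0 ht; have := @expR_conv t (ln s) 0 ht.
rewrite mulr0 addr0 expR0 lnK ?posrE // mulr1 => h.
by apply: (le_trans h); lra.
Qed.

Lemma eqle (x y : R) : x = y -> x <= y. Proof. by move=> ->. Qed.

Definition good (r : R) := forall t, 0 <= t <= 2^-1 ->
  (2^-1 - t) + (t + 2^-1) * r <= expR (t * ln r).

Lemma good_mono (r0 r : R) : 0 < r0 -> r0 <= r -> r <= 1 -> good r0 -> good r.
Proof.
move=> r00 r0r r1 g0 t ht.
have rp : 0 < r by apply: lt_le_trans r0r.
have [r01|r01] := eqVneq r0 1.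
  have -> : r = 1 by apply/eqP; rewrite eq_le r1 -r01 r0r.
  rewrite ln1 mulr0 expR0; lra.
have r0lt1 : r0 < 1 by rewrite lt_neqAle r01 (le_trans r0r r1).
have t01 : 0 <= t <= 1 by case/andP: ht => ? ?; apply/andP; split; lra.
set P := expR (t * ln r).
have P0 : 0 < P by apply: expR_gt0.
have hA := g0 t ht.
have b1 := @bern (r0 / r) t (divr_gt0 r00 rp) t01.
have rip : 0 < r^-1 by rewrite invr_gt0.
have b2 := @bern (r^-1) t rip t01.
rewrite ln_div ?posrE // mulrBr expRB -/P in b1.
rewrite lnV ?posrE // mulrN expRN -/P in b2.
set A := expR (t * ln r0) in hA b1.
set Q := P / r.
have PQ : P = Q * r by rewrite /Q divfK // gt_eqF.
have b1' : A <= P + t * (Q * r0 - P).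
  rewrite ler_pdivrMr // in b1; apply: (le_trans b1).
  rewrite /Q; apply: eqle; field; rewrite gt_eqF //.
have b2' : 1 <= P + t * (Q - P).
  rewrite -div1r ler_pdivrMr // in b2; apply: (le_trans b2).
  rewrite /Q; apply: eqle; field; rewrite gt_eqF //.
set l := (1 - r) / (1 - r0).
have l0 : 0 <= l by rewrite /l divr_ge0 //; lra.
have l1 : l <= 1 by rewrite /l ler_pdivrMr; lra.
have hl : l * r0 + (1 - l) = r by rewrite /l; field; lra.
clearbody l.
have e1 : l * A <= l * (P + t * (Q * r0 - P)) by apply: ler_wpM2l.
have e2 : (1 - l) * 1 <= (1 - l) * (P + t * (Q - P)) by apply: ler_wpM2l; lra.
have e3 : l * ((2^-1 - t) + (t + 2^-1) * r0) <= l * A by apply: ler_wpM2l.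
have : l * (P + t * (Q * r0 - P)) + (1 - l) * (P + t * (Q - P)) = P + t * (Q * (l * r0 + (1 - l))) - t * P.
  ring.
rewrite hl -PQ => e4.
have : (2^-1 - t) + (t + 2^-1) * r = l * ((2^-1 - t) + (t + 2^-1) * r0) + (1 - l) * 1.
  rewrite -hl. rewrite !(mulrDl, mulrDr, mulrBl, mulrBr). lra.
move=> e5; rewrite e5; lra.
Qed.

Lemma good_ustar (u : R) : 0 < u < 1 ->
  ln ((1 - u) / (- ln u)) - 1 - 2^-1 * ((1 + u) * ln u / (1 - u)) = 0 ->
  good u.
Proof.
case/andP=> u0 u1 hphi t ht.
have L0 : ln u < 0 by apply: ln_lt0; rewrite u0 u1.
set L := ln u in hphi L0 *.
set c := (1 - u) / (- L) in hphi.
have c0 : 0 < c by rewrite /c divr_gt0 //; lra.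
have hlc : ln c = 1 + 2^-1 * ((1 + u) * L / (1 - u)) by lra.
have hcL : c * L = u - 1 by rewrite /c; field; rewrite lt_eqF.
have : expR (t * L) = c * expR (t * L - ln c) by rewrite expRB lnK ?posrE // [c * _]mulrC divfK // gt_eqF.
move=> ->.
have h1 := expR_ge1Dx (t * L - ln c).
have h2 : c * (1 + (t * L - ln c)) <= c * expR (t * L - ln c) by apply: ler_wpM2l => //; exact: ltW.
apply: le_trans h2; apply: eqle.
rewrite hlc.
have -> : c * (1 + (t * L - (1 + 2^-1 * ((1 + u) * L / (1 - u))))) = t * (c * L) - 2^-1 * (1 + u) * (c * L) / (1 - u).
  field; lra.
rewrite hcL; field; lra.
Qed.

Lemma keyB (r g : R) : 0 < r <= 1 -> good r -> 0 <= g <= 1 ->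
  (1 - g) + g * r <= expR ((g - 2^-1) * ln r).
Proof.
case/andP=> r0 r1 gr /andP[g0 g1].
have lr : ln r <= 0 by apply: ln_le0.
have [gh|gh] := leP g (2^-1).
  have h1 := expR_ge1Dx ((g - 2^-1) * ln r).
  have h2 : 0 <= (g - 2^-1) * ln r by apply: mulr_le0; lra.
  have h3 : g * r <= g by rewrite ler_piMr.
  lra.
have := gr (g - 2^-1).
have -> : (2^-1 - (g - 2^-1)) + (g - 2^-1 + 2^-1) * r = (1 - g) + g * r by field.
apply; apply/andP; split; lra.
Qed.
Lemma exp_step (x y a b : R) : a <= expR x -> 0 <= a -> b <= a * a -> y = x + x -> b <= expR y.
Proof.
move=> ha a0 hb ->; rewrite expRD; apply: le_trans hb _; apply: ler_pM => //.
Qed.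
Lemma expE_lb : ((((((188%:R * 1000%:R + 306%:R) * 1000%:R + 358%:R) * 1000%:R + 588%:R) * 1000%:R + 746%:R) / 10%:R ^+ 15) : R) <= expR (- (16696%:R / 10%:R ^+ 4)).
Proof.
have c0 : ((((((999%:R * 1000%:R + 898%:R) * 1000%:R + 95%:R) * 1000%:R + 703%:R) * 1000%:R + 125%:R) / 10%:R ^+ 15) : R) <= expR ((- (16696%:R / 10%:R ^+ 4)) / 2%:R ^+ 14) by apply: le_trans _ (expR_ge1Dx _); lra.
have c1 : ((((((999%:R * 1000%:R + 796%:R) * 1000%:R + 201%:R) * 1000%:R + 790%:R) * 1000%:R + 735%:R) / 10%:R ^+ 15) : R) <= expR ((- (16696%:R / 10%:R ^+ 4)) / 2%:R ^+ 13) by apply: (exp_step _ _ _ _ c0); clear c0; lra.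
clear c0.
have c2 : ((((((999%:R * 1000%:R + 592%:R) * 1000%:R + 445%:R) * 1000%:R + 115%:R) * 1000%:R + 180%:R) / 10%:R ^+ 15) : R) <= expR ((- (16696%:R / 10%:R ^+ 4)) / 2%:R ^+ 12) by apply: (exp_step _ _ _ _ c1); clear c1; lra.
clear c1.
have c3 : ((((((999%:R * 1000%:R + 185%:R) * 1000%:R + 56%:R) * 1000%:R + 331%:R) * 1000%:R + 344%:R) / 10%:R ^+ 15) : R) <= expR ((- (16696%:R / 10%:R ^+ 4)) / 2%:R ^+ 11) by apply: (exp_step _ _ _ _ c2); clear c2; lra.
clear c2.
have c4 : ((((((998%:R * 1000%:R + 370%:R) * 1000%:R + 776%:R) * 1000%:R + 795%:R) * 1000%:R + 871%:R) / 10%:R ^+ 15) : R) <= expR ((- (16696%:R / 10%:R ^+ 4)) / 2%:R ^+ 10) by apply: (exp_step _ _ _ _ c3); clear c3; lra.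
clear c3.
have c5 : ((((((996%:R * 1000%:R + 744%:R) * 1000%:R + 207%:R) * 1000%:R + 959%:R) * 1000%:R + 990%:R) / 10%:R ^+ 15) : R) <= expR ((- (16696%:R / 10%:R ^+ 4)) / 2%:R ^+ 9) by apply: (exp_step _ _ _ _ c4); clear c4; lra.
clear c4.
have c6 : ((((((993%:R * 1000%:R + 499%:R) * 1000%:R + 16%:R) * 1000%:R + 101%:R) * 1000%:R + 787%:R) / 10%:R ^+ 15) : R) <= expR ((- (16696%:R / 10%:R ^+ 4)) / 2%:R ^+ 8) by apply: (exp_step _ _ _ _ c5); clear c5; lra.
clear c5.
have c7 : ((((((987%:R * 1000%:R + 40%:R) * 1000%:R + 294%:R) * 1000%:R + 995%:R) * 1000%:R + 218%:R) / 10%:R ^+ 15) : R) <= expR ((- (16696%:R / 10%:R ^+ 4)) / 2%:R ^+ 7) by apply: (exp_step _ _ _ _ c6); clear c6; lra.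
clear c6.
have c8 : ((((((974%:R * 1000%:R + 248%:R) * 1000%:R + 543%:R) * 1000%:R + 944%:R) * 1000%:R + 246%:R) / 10%:R ^+ 15) : R) <= expR ((- (16696%:R / 10%:R ^+ 4)) / 2%:R ^+ 6) by apply: (exp_step _ _ _ _ c7); clear c7; lra.
clear c7.
have c9 : ((((((949%:R * 1000%:R + 160%:R) * 1000%:R + 225%:R) * 1000%:R + 377%:R) * 1000%:R + 483%:R) / 10%:R ^+ 15) : R) <= expR ((- (16696%:R / 10%:R ^+ 4)) / 2%:R ^+ 5) by apply: (exp_step _ _ _ _ c8); clear c8; lra.
clear c8.
have c10 : ((((((900%:R * 1000%:R + 905%:R) * 1000%:R + 133%:R) * 1000%:R + 438%:R) * 1000%:R + 634%:R) / 10%:R ^+ 15) : R) <= expR ((- (16696%:R / 10%:R ^+ 4)) / 2%:R ^+ 4) by apply: (exp_step _ _ _ _ c9); clear c9; lra.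
clear c9.
have c11 : ((((((811%:R * 1000%:R + 630%:R) * 1000%:R + 59%:R) * 1000%:R + 456%:R) * 1000%:R + 82%:R) / 10%:R ^+ 15) : R) <= expR ((- (16696%:R / 10%:R ^+ 4)) / 2%:R ^+ 3) by apply: (exp_step _ _ _ _ c10); clear c10; lra.
clear c10.
have c12 : ((((((658%:R * 1000%:R + 743%:R) * 1000%:R + 353%:R) * 1000%:R + 412%:R) * 1000%:R + 683%:R) / 10%:R ^+ 15) : R) <= expR ((- (16696%:R / 10%:R ^+ 4)) / 2%:R ^+ 2) by apply: (exp_step _ _ _ _ c11); clear c11; lra.
clear c11.
have c13 : ((((((433%:R * 1000%:R + 942%:R) * 1000%:R + 805%:R) * 1000%:R + 665%:R) * 1000%:R + 386%:R) / 10%:R ^+ 15) : R) <= expR ((- (16696%:R / 10%:R ^+ 4)) / 2%:R ^+ 1) by apply: (exp_step _ _ _ _ c12); clear c12; lra.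
clear c12.
have c14 : ((((((188%:R * 1000%:R + 306%:R) * 1000%:R + 358%:R) * 1000%:R + 588%:R) * 1000%:R + 746%:R) / 10%:R ^+ 15) : R) <= expR (- (16696%:R / 10%:R ^+ 4)) by apply: (exp_step _ _ _ _ c13); clear c13; lra.
clear c13.
exact: c14.
Qed.

Lemma expL_lb : (((((((197%:R * 1000%:R + 28%:R) * 1000%:R + 432%:R) * 1000%:R + 918%:R) * 1000%:R + 220%:R) * 1000%:R + 911%:R) / 10%:R ^+ 15) : R) <= expR (52842%:R / 10%:R ^+ 4).
Proof.
have c0 : (((((((1%:R * 1000%:R + 0%:R) * 1000%:R + 322%:R) * 1000%:R + 521%:R) * 1000%:R + 972%:R) * 1000%:R + 656%:R) / 10%:R ^+ 15) : R) <= expR ((52842%:R / 10%:R ^+ 4) / 2%:R ^+ 14) by apply: le_trans _ (expR_ge1Dx _); lra.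
have c1 : (((((((1%:R * 1000%:R + 0%:R) * 1000%:R + 645%:R) * 1000%:R + 147%:R) * 1000%:R + 965%:R) * 1000%:R + 734%:R) / 10%:R ^+ 15) : R) <= expR ((52842%:R / 10%:R ^+ 4) / 2%:R ^+ 13) by apply: (exp_step _ _ _ _ c0); clear c0; lra.
clear c0.
have c2 : (((((((1%:R * 1000%:R + 1%:R) * 1000%:R + 290%:R) * 1000%:R + 712%:R) * 1000%:R + 147%:R) * 1000%:R + 365%:R) / 10%:R ^+ 15) : R) <= expR ((52842%:R / 10%:R ^+ 4) / 2%:R ^+ 12) by apply: (exp_step _ _ _ _ c1); clear c1; lra.
clear c1.
have c3 : (((((((1%:R * 1000%:R + 2%:R) * 1000%:R + 583%:R) * 1000%:R + 90%:R) * 1000%:R + 232%:R) * 1000%:R + 577%:R) / 10%:R ^+ 15) : R) <= expR ((52842%:R / 10%:R ^+ 4) / 2%:R ^+ 11) by apply: (exp_step _ _ _ _ c2); clear c2; lra.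
clear c2.
have c4 : (((((((1%:R * 1000%:R + 5%:R) * 1000%:R + 172%:R) * 1000%:R + 852%:R) * 1000%:R + 820%:R) * 1000%:R + 303%:R) / 10%:R ^+ 15) : R) <= expR ((52842%:R / 10%:R ^+ 4) / 2%:R ^+ 10) by apply: (exp_step _ _ _ _ c3); clear c3; lra.
clear c3.
have c5 : (((((((1%:R * 1000%:R + 10%:R) * 1000%:R + 372%:R) * 1000%:R + 464%:R) * 1000%:R + 46%:R) * 1000%:R + 906%:R) / 10%:R ^+ 15) : R) <= expR ((52842%:R / 10%:R ^+ 4) / 2%:R ^+ 9) by apply: (exp_step _ _ _ _ c4); clear c4; lra.
clear c4.
have c6 : (((((((1%:R * 1000%:R + 20%:R) * 1000%:R + 852%:R) * 1000%:R + 516%:R) * 1000%:R + 104%:R) * 1000%:R + 216%:R) / 10%:R ^+ 15) : R) <= expR ((52842%:R / 10%:R ^+ 4) / 2%:R ^+ 8) by apply: (exp_step _ _ _ _ c5); clear c5; lra.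
clear c5.
have c7 : (((((((1%:R * 1000%:R + 42%:R) * 1000%:R + 139%:R) * 1000%:R + 859%:R) * 1000%:R + 636%:R) * 1000%:R + 308%:R) / 10%:R ^+ 15) : R) <= expR ((52842%:R / 10%:R ^+ 4) / 2%:R ^+ 7) by apply: (exp_step _ _ _ _ c6); clear c6; lra.
clear c6.
have c8 : (((((((1%:R * 1000%:R + 86%:R) * 1000%:R + 55%:R) * 1000%:R + 487%:R) * 1000%:R + 42%:R) * 1000%:R + 783%:R) / 10%:R ^+ 15) : R) <= expR ((52842%:R / 10%:R ^+ 4) / 2%:R ^+ 6) by apply: (exp_step _ _ _ _ c7); clear c7; lra.
clear c7.
have c9 : (((((((1%:R * 1000%:R + 179%:R) * 1000%:R + 516%:R) * 1000%:R + 520%:R) * 1000%:R + 935%:R) * 1000%:R + 736%:R) / 10%:R ^+ 15) : R) <= expR ((52842%:R / 10%:R ^+ 4) / 2%:R ^+ 5) by apply: (exp_step _ _ _ _ c8); clear c8; lra.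
clear c8.
have c10 : (((((((1%:R * 1000%:R + 391%:R) * 1000%:R + 259%:R) * 1000%:R + 223%:R) * 1000%:R + 160%:R) * 1000%:R + 342%:R) / 10%:R ^+ 15) : R) <= expR ((52842%:R / 10%:R ^+ 4) / 2%:R ^+ 4) by apply: (exp_step _ _ _ _ c9); clear c9; lra.
clear c9.
have c11 : (((((((1%:R * 1000%:R + 935%:R) * 1000%:R + 602%:R) * 1000%:R + 226%:R) * 1000%:R + 28%:R) * 1000%:R + 718%:R) / 10%:R ^+ 15) : R) <= expR ((52842%:R / 10%:R ^+ 4) / 2%:R ^+ 3) by apply: (exp_step _ _ _ _ c10); clear c10; lra.
clear c10.
have c12 : (((((((3%:R * 1000%:R + 746%:R) * 1000%:R + 555%:R) * 1000%:R + 977%:R) * 1000%:R + 407%:R) * 1000%:R + 328%:R) / 10%:R ^+ 15) : R) <= expR ((52842%:R / 10%:R ^+ 4) / 2%:R ^+ 2) by apply: (exp_step _ _ _ _ c11); clear c11; lra.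
clear c11.
have c13 : (((((((14%:R * 1000%:R + 36%:R) * 1000%:R + 681%:R) * 1000%:R + 691%:R) * 1000%:R + 846%:R) * 1000%:R + 578%:R) / 10%:R ^+ 15) : R) <= expR ((52842%:R / 10%:R ^+ 4) / 2%:R ^+ 1) by apply: (exp_step _ _ _ _ c12); clear c12; lra.
clear c12.
have c14 : (((((((197%:R * 1000%:R + 28%:R) * 1000%:R + 432%:R) * 1000%:R + 918%:R) * 1000%:R + 220%:R) * 1000%:R + 911%:R) / 10%:R ^+ 15) : R) <= expR (52842%:R / 10%:R ^+ 4) by apply: (exp_step _ _ _ _ c13); clear c13; lra.
clear c13.
exact: c14.
Qed.


Lemma good197 : good (197%:R^-1).
Proof.
move=> t /andP[t0 t1].
rewrite lnV ?posrE // mulrN.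
have hL : ln (197%:R : R) <= 52842%:R / 10%:R ^+ 4.
  rewrite -ler_expR lnK ?posrE //; apply: le_trans (expL_lb); lra.
have hE := expE_lb.
set L := ln (197%:R : R) in hL *.
set tau : R := 16696%:R / 10%:R ^+ 4 in hE *.
have -> : expR (- (t * L)) = expR (- tau) * expR (tau - t * L) by rewrite -expRD; congr expR; ring.
have h1 := expR_ge1Dx (tau - t * L).
have htL : t * L <= t * (52842%:R / 10%:R ^+ 4) by apply: ler_wpM2l.
have pos : 0 <= 1 + (tau - t * L).
  clear hE h1; rewrite /tau; lra.
have E0 : (0 : R) <= (((((188%:R * 1000%:R + 306%:R) * 1000%:R + 358%:R) * 1000%:R + 588%:R) * 1000%:R + 746%:R) / 10%:R ^+ 15) by lra.
have hP : (((((188%:R * 1000%:R + 306%:R) * 1000%:R + 358%:R) * 1000%:R + 588%:R) * 1000%:R + 746%:R) / 10%:R ^+ 15) * (1 + (tau - t * L)) <= expR (- tau) * expR (tau - t * L).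
  by apply: ler_pM => //.
move: hP htL t0 t1; rewrite /tau; clear.
move=> hP htL t0 t1.
lra.
Qed.
Lemma LC_le (phi h : R -> R) z : log_concave h -> (forall w, phi w <= h w) ->
  LCmaj phi z <= h z.
Proof.
move=> hlc hmaj; rewrite /LCmaj; apply: ge_inf.
  by exists 0 => y [g [[g0 _] _] <-].
by exists h.
Qed.

Lemma LC_ge (phi : R -> R) z v :
  (exists g0, log_concave g0 /\ forall w, phi w <= g0 w) ->
  (forall g, log_concave g -> (forall w, phi w <= g w) -> v <= g z) ->
  v <= LCmaj phi z.
Proof.
move=> [g0 hg0] H; rewrite /LCmaj; apply: lb_le_inf.
  by exists (g0 z), g0.
by move=> y [g [hg1 hg2] <-]; apply: H.
Qed.

Lemma lc_exp (A B : R) : log_concave (fun z => expR (A + B * z)).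
Proof.
split; first by move=> x; apply: expR_ge0.
move=> x y t _; rewrite -!expRM -expRD; apply: eqle; congr expR; ring.
Qed.

Lemma lc_one : log_concave (fun _ : R => 1).
Proof.
split; first by move=> x.
by move=> x y t _; rewrite powR1 mulr1.
Qed.

Lemma powR_pos (a t : R) : 0 < a -> a `^ t = expR (t * ln a).
Proof. by move=> a0; rewrite /powR gt_eqF. Qed.

Lemma lc_interp (g : R -> R) x y a b t : log_concave g -> 0 < a -> 0 < b ->
  a <= g x -> b <= g y -> 0 <= t <= 1 ->
  expR (t * ln a + (1 - t) * ln b) <= g (t * x + (1 - t) * y).
Proof.
move=> [g0 hg] a0 b0 ha hb /andP[t0 t1].
have [->|tn0] := eqVneq t 0.
  by rewrite !mul0r subr0 !mul1r !add0r lnK ?posrE.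
have [->|tn1] := eqVneq t 1.
  by rewrite !mul1r subrr !mul0r !addr0 lnK ?posrE.
have tt : 0 < t < 1 by rewrite !lt_neqAle eq_sym tn0 tn1 t0 t1.
apply: le_trans (hg x y t tt).
rewrite expRD -!powR_pos //.
apply: ler_pM; rewrite ?powR_ge0 //.
  by apply: ge0_ler_powR => //; rewrite nnegrE ?(ltW a0) ?(le_trans (ltW a0) ha).
apply: ge0_ler_powR => //; first lra.
  by rewrite nnegrE ltW.
by rewrite nnegrE (le_trans (ltW b0) hb).
Qed.
End S.

Section Q.
Variable R : realType.
Variable n : nat.

Definition q (k : int) : R := tailR n (n%:R + 2 * k%:~R).

Lemma Rsum_nf (e : {ffun 'I_n -> bool}) : @Rsum R n e = n%:R - 2 * (nf e)%:R :> R.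
Proof.
rewrite /Rsum (eq_bigr (fun i : 'I_n => 1 - 2 * ((~~ e i : nat)%:R : R))); last first.
  by move=> i _; case: (e i) => /=; lra.
rewrite sumrB sumr_const card_ord -mulr_sumr -natr_sum.
congr (_ - 2 * _%:R).
rewrite /nf -sum1_card [RHS]big_mkcond /=; apply: eq_bigr => i _; rewrite inE.
by case: (e i).
Qed.

Lemma cond_q (k : int) (e : {ffun 'I_n -> bool}) :
  (n%:R + 2 * k%:~R <= @Rsum R n e) = (k <= - (nf e)%:Z).
Proof.
rewrite Rsum_nf lerD2l -mulrN ler_pM2l //.
have -> : - ((nf e)%:R : R) = ((- (nf e)%:Z)%:~R) by rewrite rmorphN.
by rewrite ler_int.
Qed.

Lemma qE k : q k = (if k <= 0 then (Nc n `|k|%N)%:R else 0) / 2 ^+ n.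
Proof.
rewrite /q /tailR; congr (_ / _).
case: ifP => hk.
  congr (_%:R); apply: eq_card => e; rewrite !inE cond_q.
  by apply/idP/idP; lia.
rewrite (_ : #|_| = 0%N) //; apply: eq_card0 => e; rewrite !inE cond_q.
by apply/negP; lia.
Qed.

Lemma Nc_mono j j' : (j <= j')%N -> (Nc n j <= Nc n j')%N.
Proof.
move=> h; rewrite /Nc; apply: subset_leq_card; apply/fintype.subsetP => e; rewrite !inE => h'.
exact: leq_trans h' h.
Qed.

Lemma D_gt0 : 0 < (2 : R) ^+ n. Proof. by rewrite exprn_gt0. Qed.

Lemma q_ge0 k : 0 <= q k.
Proof. by rewrite qE divr_ge0 // ?(ltW D_gt0) //; case: ifP. Qed.

Lemma q_le1 k : q k <= 1.
Proof.
rewrite qE ler_pdivrMr ?D_gt0 // mul1r; case: ifP => _; last exact: ltW D_gt0.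
by rewrite -natrX ler_nat Nc_le.
Qed.

Lemma q_pos k : k <= 0 -> 0 < q k.
Proof.
by move=> hk; rewrite qE hk divr_gt0 ?D_gt0 // ltr0n Nc_Sb Sb_ge1.
Qed.

Lemma q_mono k : q (k + 1) <= q k.
Proof.
rewrite !qE; apply: ler_wpM2r; first by rewrite invr_ge0 ltW ?D_gt0.
case: ifP => h1; last by case: ifP.
have -> : k <= 0 by lia.
by rewrite ler_nat; apply: Nc_mono; lia.
Qed.

Lemma q_LC k : q (k - 1) * q (k + 1) <= q k * q k.
Proof.
have [hk|hk] := leP 0 k.
  rewrite [q (k + 1)]qE (_ : (k + 1 <= 0) = false); last by lia.
  by rewrite mul0r mulr0 mulr_ge0 ?q_ge0.
have h1 : k - 1 <= 0 by lia.
have h2 : k + 1 <= 0 by lia.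
have h3 : k <= 0 by lia.
rewrite !qE h1 h2 h3.
rewrite !mulf_div; apply: ler_wpM2r; first by rewrite invr_ge0 mulr_ge0 // ltW ?D_gt0.
rewrite -!natrM ler_nat !Nc_Sb.
have := SbLC n (absz (k + 1)).
have -> : absz (k - 1) = ((absz (k + 1))).+2 by lia.
have -> : absz k = ((absz (k + 1))).+1 by lia.
by rewrite mulnC.
Qed.

Lemma q_one k : k <= - (n%:Z) -> q k = 1.
Proof.
move=> hk; rewrite qE (_ : k <= 0); last by lia.
rewrite Nc_full; last by lia.
by rewrite natrX divff // gt_eqF // D_gt0.
Qed.

Lemma q_ratio (j : nat) : (j <= n)%N ->
  (j.+1)%:R / (n.+1)%:R <= q (- j%:Z) / q (- j%:Z - 1).
Proof.
move=> jn; have h1 : - j%:Z <= 0 by lia.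
have h2 : - j%:Z - 1 <= 0 by lia.
rewrite !qE h1 h2.
have -> : `|- j%:Z|%N = j by lia.
have -> : `|- j%:Z - 1|%N = j.+1 by lia.
have p1 : 0 < (Nc n j.+1)%:R :> R by rewrite ltr0n Nc_Sb Sb_ge1.
have p2 : 0 < (Nc n j)%:R :> R by rewrite ltr0n Nc_Sb Sb_ge1.
have -> : (Nc n j)%:R / 2 ^+ n / ((Nc n j.+1)%:R / 2 ^+ n) = (Nc n j)%:R / (Nc n j.+1)%:R :> R.
  by field; rewrite !gt_eqF ?D_gt0.
rewrite ler_pdivrMr ?ltr0Sn // mulrAC ler_pdivlMr //.
rewrite -!natrM ler_nat !Nc_Sb; apply: leq_trans (Sb_ratio n j jn) _; by rewrite mulnC.
Qed.

Lemma tailR_mono z z' : z <= z' -> tailR n z' <= tailR n z :> R.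
Proof.
move=> h; rewrite /tailR; apply: ler_wpM2r; first by rewrite invr_ge0 ltW ?D_gt0.
rewrite ler_nat; apply: subset_leq_card; apply/fintype.subsetP => e; rewrite !inE => h'.
exact: le_trans h'.
Qed.

Lemma tailR_le1 z : tailR n z <= 1 :> R.
Proof.
rewrite /tailR ler_pdivrMr ?D_gt0 // mul1r -natrX ler_nat.
by apply: leq_trans (max_card _) _; rewrite card_ffun card_bool card_ord.
Qed.


Lemma ratio_right (f : int -> R) (m : int) :
  (forall k, 0 <= f k) -> (forall k, f (k + 1) <= f k) ->
  (forall k, f (k - 1) * f (k + 1) <= f k * f k) ->
  forall d : nat, f (m + d%:Z) * f (m - 1) <= f (m + d%:Z - 1) * f m.
Proof.
move=> f0 fm flc; elim=> [|d IH].
  by rewrite addr0 mulrC.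
set x := m + d%:Z in IH *.
have -> : m + d.+1%:Z = x + 1 by rewrite /x -addn1 PoszD addrA.
rewrite addrK.
have hlc := flc x.
have [z|pz] := eqVneq (f (x - 1)) 0.
  have fx0 : f x = 0.
    apply/eqP; rewrite eq_le f0 andbT; have := fm (x - 1); rewrite subrK z; done.
  have fx1 : f (x + 1) = 0 by apply/eqP; rewrite eq_le f0 andbT -fx0 fm.
  by rewrite fx1 fx0 !mul0r.
have p : 0 < f (x - 1) by rewrite lt_neqAle eq_sym pz f0.
rewrite -(ler_pM2l p).
apply: (@le_trans _ _ (f x * f x * f (m - 1))).
  by rewrite mulrA; apply: ler_wpM2r.
rewrite -mulrA [X in _ <= X]mulrCA; by apply: ler_wpM2l.
Qed.

Lemma ratio_left (f : int -> R) (m : int) :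
  (forall k, 0 <= f k) ->
  (forall k, f (k - 1) * f (k + 1) <= f k * f k) ->
  (forall d : nat, 0 < f (m - 1 - d%:Z)) ->
  forall d : nat, f (m - 1 - d%:Z - 1) * f m <= f (m - 1 - d%:Z) * f (m - 1).
Proof.
move=> f0 flc fp; elim=> [|d IH].
  by rewrite subr0; have := flc (m - 1); rewrite subrK.
set y := m - 1 - d%:Z in IH *.
have -> : m - 1 - d.+1%:Z = y - 1 by rewrite /y -addn1 PoszD opprD addrA.
have p : 0 < f (y - 1) by have := fp d.+1; rewrite /y -addn1 PoszD opprD addrA.
have hlc := flc (y - 1); rewrite subrK in hlc.
rewrite -(ler_pM2l p).
apply: (@le_trans _ _ (f (y - 1 - 1) * (f y * f (m - 1)))).
  by rewrite mulrCA; apply: ler_wpM2l.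
rewrite mulrA [X in _ <= X]mulrA; by apply: ler_wpM2r.
Qed.

Lemma pow_right (f : int -> R) (m : int) :
  (forall k, 0 <= f k) -> (forall k, f (k + 1) <= f k) ->
  (forall k, f (k - 1) * f (k + 1) <= f k * f k) -> 0 < f (m - 1) ->
  forall d : nat, f (m - 1 + d%:Z) <= f (m - 1) * (f m / f (m - 1)) ^+ d.
Proof.
move=> f0 fm flc p; elim=> [|d IH].
  by rewrite addr0 expr0 mulr1.
have hr := ratio_right f m f0 fm flc d.
have -> : m - 1 + d.+1%:Z = m + d%:Z by lia.
have e : m + d%:Z - 1 = m - 1 + d%:Z by rewrite addrAC.
rewrite e in hr.
have h1 : f (m + d%:Z) <= f (m - 1 + d%:Z) * (f m / f (m - 1)).
  by rewrite mulrA ler_pdivlMr.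
apply: (le_trans h1); rewrite exprSr [X in _ <= X]mulrA; apply: ler_wpM2r => //.
by rewrite divr_ge0.
Qed.

Lemma pow_left (f : int -> R) (m : int) :
  (forall k, 0 <= f k) ->
  (forall k, f (k - 1) * f (k + 1) <= f k * f k) ->
  (forall d : nat, 0 < f (m - 1 - d%:Z)) ->
  forall d : nat, f (m - 1 - d%:Z) * (f m / f (m - 1)) ^+ d <= f (m - 1).
Proof.
move=> f0 flc fp; elim=> [|d IH].
  by rewrite subr0 expr0 mulr1.
have hr := ratio_left f m f0 flc fp d.
have p := fp 0%N; rewrite subr0 in p.
have -> : m - 1 - d.+1%:Z = m - 1 - d%:Z - 1 by lia.
have h1 : f (m - 1 - d%:Z - 1) * (f m / f (m - 1)) <= f (m - 1 - d%:Z).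
  by rewrite mulrA ler_pdivrMr.
apply: le_trans IH; rewrite exprS mulrA; apply: ler_wpM2r => //.
by rewrite exprn_ge0 // divr_ge0.
Qed.

Lemma lemA (f : int -> R) (m : int) :
  (forall k, 0 <= f k) -> (forall k, f (k + 1) <= f k) ->
  (forall k, f (k - 1) * f (k + 1) <= f k * f k) ->
  (forall d : nat, 0 < f (m - 1 - d%:Z)) -> 0 < f m ->
  forall k, f k <= f (m - 1) * expR ((k - (m - 1))%:~R * ln (f m / f (m - 1))).
Proof.
move=> f0 fm flc fp pm k.
have p := fp 0%N; rewrite subr0 in p.
have r0 : 0 < f m / f (m - 1) by rewrite divr_gt0.
have [hk|hk] := leP (m - 1) k.
  have [d hd] : exists d : nat, k = m - 1 + d%:Z.
    by exists (absz (k - (m - 1))%R); lia.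
  rewrite hd (_ : m - 1 + d%:Z - (m - 1) = d%:Z); last by rewrite addrC addKr.
  rewrite -[(d%:Z)%:~R]/(d%:R : R) expRM_natl lnK ?posrE //.
  exact: pow_right.
have [d hd] : exists d : nat, k = m - 1 - d%:Z.
  by exists (absz ((m - 1) - k)%R); lia.
rewrite hd (_ : m - 1 - d%:Z - (m - 1) = - d%:Z); last by rewrite addrC addKr.
rewrite rmorphN /= -[(d%:Z)%:~R]/(d%:R : R) mulNr expRN expRM_natl lnK ?posrE //.
rewrite ler_pdivlMr ?exprn_gt0 //.
exact: pow_left.
Qed.

Lemma q_props : [/\ (forall k, 0 <= q k), (forall k, q (k + 1) <= q k) &
  (forall k, q (k - 1) * q (k + 1) <= q k * q k)].
Proof. by split; [exact: q_ge0 | exact: q_mono | exact: q_LC]. Qed.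

Lemma main (w : R) (m : int) : m <= 0 ->
  n%:R + 2 * (m - 1)%:~R <= w -> w <= n%:R + 2 * m%:~R ->
  good R (q m / q (m - 1)) ->
  LCmaj (tailLin n) (1 + w) <= LCmaj (tailR n) w.
Proof.
move=> m0 hw1 hw2 hg.
have [f0 fm flc] := q_props.
have fp : forall d : nat, 0 < q (m - 1 - d%:Z) by move=> d; apply: q_pos; lia.
have a0 : 0 < q (m - 1) by have := fp 0%N; rewrite subr0.
have b0 : 0 < q m by apply: q_pos.
have hA := lemA q m f0 fm flc fp b0.
set a := q (m - 1) in a0 hA hg *.
set b := q m in b0 hA hg *.
have ba : b <= a by have := fm (m - 1); rewrite subrK.
set r := b / a in hA hg.
have r0 : 0 < r by rewrite divr_gt0.
have r1 : r <= 1 by rewrite ler_pdivrMr // mul1r.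
set D := ln r in hA.
have eD : expR D = r by rewrite lnK ?posrE.
set t := (w - (n%:R + 2 * (m - 1)%:~R)) / 2.
have t01 : 0 <= t <= 1.
  rewrite /t intrB; apply/andP; split; lra.
pose h := fun z => expR ((ln a - (n%:R + 2 * m%:~R - 1) * (D / 2)) + (D / 2) * z).
have hv : h (1 + w) = expR (t * ln b + (1 - t) * ln a).
  by rewrite /h; congr expR; rewrite /D /r ln_div ?posrE // /t intrB; field.
have maj : forall z, tailLin n z <= h z.
  move=> z; rewrite /tailLin /=.
  set k := Num.floor ((z - n%:R) / 2).
  set g := (z - n%:R) / 2 - k%:~R.
  have g0 : 0 <= g by rewrite /g subr_ge0 floor_le.
  have g1 : g <= 1.
    have : (z - n%:R) / 2 < (k + 1)%:~R by rewrite -floor_lt_int ltzD1.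
    rewrite intrD /g; lra.
  have e2 : tailR n (n%:R + 2 * k%:~R + 2) = q (k + 1).
    by rewrite /q; congr (tailR n _); rewrite intrD; lra.
  rewrite e2 -/(q k).
  have A1 := hA k.
  have A2 := hA (k + 1).
  set Hk := a * expR ((k - (m - 1))%:~R * D) in A1.
  have HS : a * expR ((k + 1 - (m - 1))%:~R * D) = Hk * r.
    rewrite /Hk -eD -mulrA -expRD; congr (_ * expR _).
    rewrite (_ : k + 1 - (m - 1) = (k - (m - 1)) + 1); last by lia.
    by rewrite intrD mulrDl mul1r.
  rewrite HS in A2.
  have B := @keyB R r g.
  have Hk0 : 0 <= Hk by rewrite /Hk mulr_ge0 ?expR_ge0 // ltW.
  apply: (@le_trans _ _ (Hk * ((1 - g) + g * r))).
    have e3 : Hk * ((1 - g) + g * r) = (1 - g) * Hk + g * (Hk * r) by ring.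
    rewrite e3; apply: lerD; apply: ler_wpM2l => //; lra.
  apply: (@le_trans _ _ (Hk * expR ((g - 2^-1) * D))).
    apply: ler_wpM2l => //; apply: B => //; [by rewrite r0 r1 | by rewrite g0 g1].
  apply: eqle; rewrite /Hk /h -[X in X * _ * _](@lnK _ a) ?posrE // -!expRD.
  by congr expR; rewrite /g intrB; field.
apply: (@le_trans _ _ (h (1 + w))).
  apply: LC_le => //; exact: lc_exp.
rewrite hv; apply: LC_ge.
  exists (fun _ => 1); split; [exact: lc_one | move=> w'; exact: tailR_le1].
move=> g hlc hmaj.
have := @lc_interp R g _ _ _ _ t hlc b0 a0 (hmaj (n%:R + 2 * m%:~R)) (hmaj (n%:R + 2 * (m - 1)%:~R)) t01.
have -> // : t * (n%:R + 2 * m%:~R) + (1 - t) * (n%:R + 2 * (m - 1)%:~R) = w.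
by rewrite /t intrB; field.
Qed.

Lemma final (w r0 : R) : 0 < r0 -> r0 <= 1 -> good R r0 -> w <= n%:R ->
  (forall j : nat, (n%:R - w) / 2 < j.+1%:R -> (j <= n)%N -> r0 <= j.+1%:R / n.+1%:R) ->
  LCmaj (tailLin n) (1 + w) <= LCmaj (tailR n) w.
Proof.
move=> r00 r01 g0 wn H.
set j := Num.floor ((n%:R - w) / 2).
have j0 : 0 <= j by rewrite floor_ge0; lra.
have hj1 : j%:~R <= (n%:R - w) / 2 := floor_le _.
have hj2 : (n%:R - w) / 2 < (j + 1)%:~R by rewrite -floor_lt_int ltzD1.
have [jj ejj] : exists jj : nat, j = jj%:Z by exists (absz j); lia.
rewrite ejj in hj1 hj2.
have m0 : - jj%:Z <= 0 by lia.
have qm := q_pos _ m0.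
have qm1 : 0 < q (- jj%:Z - 1) by apply: q_pos; lia.
have rle1 : q (- jj%:Z) / q (- jj%:Z - 1) <= 1.
  by rewrite ler_pdivrMr // mul1r; have := q_mono (- jj%:Z - 1); rewrite subrK.
have rgt0 : 0 < q (- jj%:Z) / q (- jj%:Z - 1) by rewrite divr_gt0.
apply: (@main w (- jj%:Z)) => //.
- rewrite intrB intrN; rewrite intrD in hj2; lra.
- rewrite intrN; lra.
apply: (@good_mono R r0) => //.
have [jn|jn] := leqP jj n.
  apply: le_trans (q_ratio _ jn).
  apply: H => //.
  have -> : (jj.+1%:R : R) = jj%:R + 1 by rewrite mulrSr.
  by move: hj2; rewrite intrD -pmulrn mulr1z.
rewrite !q_one; try lia.
by rewrite divff.
Qed.
End Q.

Theorem corollary2p8 (R : realType) (n : nat) (b : R) (ustar : R) :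
  (1 <= n)%N -> 0 < b ->
  0 < ustar < 1 ->
  ln ((1 - ustar) / (- ln ustar)) - 1
    - 2^-1 * ((1 + ustar) * ln ustar / (1 - ustar)) = 0 ->
  let ustar2 := ustar / (1 - ustar) in
  let jstar2 : int := Num.floor ((n%:R - ustar2) / (1 + ustar2)) in
  (forall y : R,
     y * Num.sqrt n%:R / (2 * b) + n%:R / 2 <= jstar2%:~R ->
     c3 R * LCmaj (tailLin (R:=R) n) (1 + y * Num.sqrt n%:R / b)
       <= c3 R * LCmaj (tailR (R:=R) n) (y * Num.sqrt n%:R / b)) /\
  ((n <= 196)%N ->
   forall y : R,
     y * Num.sqrt n%:R / (2 * b) + n%:R / 2 <= n%:R ->
     c3 R * LCmaj (tailLin (R:=R) n) (1 + y * Num.sqrt n%:R / b)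
       <= c3 R * LCmaj (tailR (R:=R) n) (y * Num.sqrt n%:R / b)).
Proof.
move=> n1 b0 hu hphi ustar2 jstar2.
have c30 : 0 <= c3 R by rewrite /c3 divr_ge0 // mulr_ge0 // expR_ge0.
have key : forall y : R, y * Num.sqrt n%:R / (2 * b) + n%:R / 2
    = (y * Num.sqrt n%:R / b) / 2 + n%:R / 2.
  by move=> y; field; rewrite gt_eqF.
have u0 : 0 < ustar by case/andP: hu.
have u1 : ustar < 1 by case/andP: hu.
have n0 : (0 : R) <= n%:R by [].
have nu : 0 <= n%:R * ustar by rewrite mulr_ge0 // ltW.
split.
  move=> y hy; apply: ler_wpM2l => //.
  rewrite key in hy; set w := y * Num.sqrt n%:R / b in hy *.
  have hJ : jstar2%:~R <= (n%:R - ustar2) / (1 + ustar2) := floor_le _.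
  have e : (n%:R - ustar2) / (1 + ustar2) = n%:R * (1 - ustar) - ustar.
    rewrite /ustar2; field; rewrite ?subr_eq0 ?gt_eqF //; try lra.
  rewrite e in hJ.
  apply: (@final R n w ustar) => //.
  - exact: ltW.
  - exact: good_ustar.
  - lra.
  move=> j hj jn; rewrite ler_pdivlMr ?ltr0Sn //.
  rewrite -[(j.+1%:R : R)]natr1 -[(n.+1%:R : R)]natr1 in hj *.
  lra.
move=> n196 y hy; apply: ler_wpM2l => //.
rewrite key in hy; set w := y * Num.sqrt n%:R / b in hy *.
have p197 : (0 : R) < 197%:R^-1 by rewrite invr_gt0.
apply: (@final R n w (197%:R^-1)) => //.
- lra.
- exact: good197.
- lra.
move=> j hj jn; rewrite ler_pdivlMr ?ltr0Sn //.
have h1 : (n.+1%:R : R) <= 197%:R by rewrite ler_nat.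
have h2 : (1 : R) <= j.+1%:R by rewrite ler1n.
lra.
Qed.
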